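(* Let $G$ be a finite simple graph and let $L=x_1x_2\dots x_n$ be an enumeration of its vertices such that $G$ has no two secant edges with respect to $L$. Then $G$ is $3$-colorable, i.e. $\chi(G)\le 3$.
   Context: For an enumeration $L=x_1x_2\dots x_n$ of the vertices of $G$, an edge $x_ix_j$ is a jump with respect to $L$ if $|i-j|>1$. Two jumps $x_lx_m$ and $x_px_q$ with $l<m$ and $p<q$ are secant with respect to $L$ if $l<p<m<q$ or $p<l<q<m$. *)

(* Defs.v *)
From mathcomp Require Import all_boot.
Set Implicit Arguments. Unset Strict Implicit. Unset Printing Implicit Defensive.

Definition simple_graph (T : finType) (e : rel T) : Prop :=
  symmetric e /\ irreflexive e.

(* An enumeration L = x_1 ... x_n of the vertices: a duplicate-free
   sequence containing every vertex.  The position of x is index x L. *)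
Definition enumeration (T : finType) (L : seq T) : Prop :=
  uniq L /\ forall x : T, x \in L.

(* Edge x_i x_j with i < j, presented as the ordered pair (x, y) with
   index x < index y, is a jump w.r.t. L if j - i > 1. *)
Definition ordered_jump (T : finType) (e : rel T) (L : seq T) (x y : T) : bool :=
  e x y && (index x L + 1 < index y L).

Definition secant (T : finType) (e : rel T) (L : seq T) (a b c d : T) : bool :=
  [&& ordered_jump e L a b, ordered_jump e L c d &
   let l := index a L in let m := index b L in
   let p := index c L in let q := index d L in
   ((l < p) && (p < m) && (m < q)) || ((p < l) && (l < q) && (q < m))].

Definition proper_coloring (T : finType) (e : rel T) (k : nat) (c : T -> 'I_k) : Prop :=
  forall x y : T, e x y -> c x != c y.

Definition colorable (T : finType) (e : rel T) (k : nat) : Prop :=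
  exists c : T -> 'I_k, proper_coloring e c.

(* Main.v *)
Require Import Defs.
From mathcomp Require Import all_boot.
From mathcomp Require Import zify.

Lemma exmin (I : finType) (P : pred I) (F : I -> nat) :
  (exists i, P i) -> exists i, P i /\ forall j, P j -> F i <= F j.
Proof.
case=> i0 Pi0; case: (arg_minnP F Pi0) => i Pi Hi; by exists i.
Qed.

Lemma pick3 (k1 k2 : 'I_3) : exists k : 'I_3, k != k1 /\ k != k2.
Proof.
move: k1 k2 => [[|[|[|//]]] ?] [[|[|[|//]]] ?];
 first [ by exists (@Ordinal 3 0 isT) | by exists (@Ordinal 3 1 isT) | by exists (@Ordinal 3 2 isT)].
Qed.

Section Main.
Variables (T : finType) (e : rel T) (L : seq T).
Hypothesis esym : symmetric e.
Hypothesis eirr : irreflexive e.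
Hypothesis Lall : forall x : T, x \in L.
Local Notation pos x := (index x L).
Hypothesis NC : forall a b c d, e a b -> e c d ->
  ~~ [&& pos a < pos c, pos c < pos b & pos b < pos d].

Lemma NC' a b c d : e a b -> e c d -> pos a < pos c -> pos c < pos b ->
  pos b < pos d -> False.
Proof. by move=> h1 h2 h3 h4 h5; move/negP: (NC a b c d h1 h2); apply; rewrite h3 h4 h5. Qed.

Lemma pos_inj x y : pos x = pos y -> x = y.
Proof. by move=> H; by rewrite -(nth_index x (Lall x)) H nth_index. Qed.

Definition nextin (S : {set T}) u w :=
  pos u < pos w /\ forall v, v \in S -> ~~ ((pos u < pos v) && (pos v < pos w)).

Lemma nextin_uniq (S : {set T}) (u w1 w2 : T) : w1 \in S -> w2 \in S ->
  nextin S u w1 -> nextin S u w2 -> w1 = w2.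
Proof.
move=> S1 S2 [h1 n1] [h2 n2]; apply: pos_inj.
case: (ltngtP (pos w1) (pos w2)) => // h.
  by move: (n2 _ S1); rewrite h1 h.
by move: (n1 _ S2); rewrite h2 h.
Qed.

Lemma good (S : {set T}) u0 : u0 \in S -> exists u a, u \in S /\
  forall w, w \in S -> e u w -> w != a -> nextin S u w.
Proof.
move=> Su0.
pose J (pr : T * T) := [&& pr.1 \in S, pr.2 \in S, e pr.1 pr.2 &
   [exists v, [&& v \in S, pos pr.1 < pos v & pos v < pos pr.2]]].
case: (boolP [exists pr, J pr]) => [/existsP ex | nex].
- have [[l m] [Jlm minlm]] := exmin _ _ (fun pr : T * T => pos pr.2 - pos pr.1) ex.
  case/and4P: Jlm => /= Sl Sm elm /existsP exv.
  have [u [/and3P [Su lu um] minu]] := exmin _ _ (fun v => pos v) exv.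
  exists u, l; split => // w Sw euw wl.
  have wu : pos w != pos u.
    apply/negP=> /eqP /pos_inj wu; by rewrite wu eirr in euw.
  have wl' : pos w != pos l by apply/negP=> /eqP /pos_inj; apply/eqP.
  have h1 : pos l < pos w.
    case: (ltngtP (pos l) (pos w)) => // h; last by rewrite h eqxx in wl'.
    by case: (NC' w u l m (eq_ind _ _ euw _ (esym u w)) elm h lu um).
  have h2 : pos u < pos w.
    case: (ltngtP (pos u) (pos w)) => // h; last by rewrite h eqxx in wu.
    have := minu w; rewrite /= Sw h1 (ltn_trans h um) => /(_ isT).
    by rewrite leqNgt h.
  have h3 : pos w <= pos m.
    rewrite leqNgt; apply/negP => h.
    by case: (NC' l m u w elm euw lu um h).
  split => // v Sv; apply/negP => /andP [v1 v2].
  have Juw : J (u, w).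
    rewrite /J /= Su Sw euw /=; apply/existsP; exists v; by rewrite Sv v1 v2.
  have := minlm _ Juw; rewrite /=; lia.
- have exu : exists v, v \in S by exists u0.
  have [u [Su minu]] := exmin _ _ (fun v => pos v) exu.
  exists u, u; split => // w Sw euw _.
  have wu : pos w != pos u.
    apply/negP=> /eqP /pos_inj wu; by rewrite wu eirr in euw.
  have h2 : pos u < pos w by rewrite ltn_neqAle eq_sym wu minu.
  split => // v Sv; apply/negP => /andP [v1 v2].
  move/negP: nex; apply; apply/existsP; exists (u, w).
  rewrite /J /= Su Sw euw /=; apply/existsP; exists v; by rewrite Sv v1 v2.
Qed.
Lemma color_set n : forall S : {set T}, #|S| = n -> exists c : T -> 'I_3,
  forall x y, x \in S -> y \in S -> e x y -> c x != c y.
Proof.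
elim: n => [|n IH] S cS.
  exists (fun _ => ord0) => x y xS; by rewrite (card0_eq cS) in xS.
have [u0 Su0] : exists u0, u0 \in S.
  by apply/set0Pn; rewrite -card_gt0 cS.
have [u [a [Su Hg]]] := good S u0 Su0.
have cS' : #|S :\ u| = n by move: cS; rewrite (cardsD1 u S) Su add1n => -[].
have [c Hc] := IH _ cS'.
pose k2 := if [pick w in S :\ u | e u w && (w != a)] is Some w then c w else c a.
have [k [k1 kk2]] := pick3 (c a) k2.
have key : forall y, y \in S -> e u y -> k != c y.
  move=> y Sy euy.
  case: (eqVneq y a) => [-> // | ya].
  move: kk2; rewrite /k2; case: pickP => [w /andP [Sw /andP [euw wa]] | none].
    have Sw' : w \in S by move: Sw; rewrite in_setD1 => /andP [].
    by rewrite (nextin_uniq _ _ _ _ Sy Sw' (Hg y Sy euy ya) (Hg w Sw' euw wa)).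
  have yu : y != u by apply/negP => /eqP yu; rewrite yu eirr in euy.
  by move: (none y); rewrite in_setD1 yu Sy euy ya.
exists (fun x => if x == u then k else c x) => x y Sx Sy exy.
case: (eqVneq x u) => [xu | xu]; case: (eqVneq y u) => [yu | yu].
- by rewrite xu yu eirr in exy.
- by subst x; apply: key.
- by subst y; rewrite eq_sym; apply: key => //; rewrite esym.
- by apply: Hc => //; rewrite in_setD1 ?xu ?yu.
Qed.
End Main.

Theorem lemma2 (T : finType) (e : rel T) (L : seq T) :
  simple_graph e -> enumeration L ->
  (forall a b c d : T, ~~ secant e L a b c d) ->
  colorable e 3.
Proof.
move=> [esym eirr] [_ Lall] Hs.
have NC : forall a b c d, e a b -> e c d ->
  ~~ [&& index a L < index c L, index c L < index b L & index b L < index d L].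
  move=> a b c d eab ecd; apply/negP => /and3P [h1 h2 h3].
  move/negP: (Hs a b c d); apply.
  rewrite /secant /ordered_jump eab ecd /= h1 h2 h3 /=.
  rewrite addn1 (leq_ltn_trans h1 h2) addn1 (leq_ltn_trans h2 h3) //.
have [c Hc] := color_set _ _ _ esym eirr Lall NC _ _ (erefl #|[set: T]|).
by exists c => x y exy; apply: Hc; rewrite ?in_setT.
Qed.
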